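(* Let $\mathbb{X},\mathbb{Y}$ be real Banach spaces such that $\operatorname{Sm}\mathbb{X}$ and $\operatorname{Sm}\mathbb{Y}$ are dense $G_\delta$ subsets of $\mathbb{X}$ and $\mathbb{Y}$ respectively. If a bijective bounded linear operator $T:\mathbb{X}\to\mathbb{Y}$ preserves Birkhoff–James orthogonality at each point of $\operatorname{Sm}\mathbb{X}\cap T^{-1}(\operatorname{Sm}\mathbb{Y})$, then $T$ is a scalar multiple of an isometry, i.e. there is a constant $\lambda>0$ with $\|Tx\|=\lambda\|x\|$ for all $x\in\mathbb{X}$.
   Context: $u\perp_B v$ means $\|u+\lambda v\|\ge\|u\|$ for all real $\lambda$. $T$ preserves Birkhoff–James orthogonality at $x$ if $x\perp_B v$ implies $Tx\perp_B Tv$ for all $v$. For non-zero $z$, $J(z)=\{f\in\mathbb{X}^*:\|f\|=1,\ f(z)=\|z\|\}$; $z$ is smooth if $J(z)$ is a singleton; $\operatorname{Sm}\mathbb{X}$ is the set of smooth points. *)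

(* Defs.v *)
From HB Require Import structures.
From mathcomp Require Import all_boot all_order all_algebra.
From mathcomp Require Import all_classical all_reals all_analysis.
From mathcomp Require Import borel_hierarchy.
Set Implicit Arguments. Unset Strict Implicit. Unset Printing Implicit Defensive.
Import Order.TTheory GRing.Theory Num.Theory.
Import numFieldNormedType.Exports.
Local Open Scope classical_set_scope.
Local Open Scope ring_scope.

Section BJ.
Context {R : realType} {X : normedModType R}.

Definition bj_orth (u v : X) : Prop := forall l : R, `|u| <= `|u + l *: v|.

Definition linear_functional (f : X -> R) : Prop :=
  forall (a : R) (x y : X), f (a *: x + y) = a * f x + f y.

Definition in_dual (f : X -> R) : Prop := linear_functional f /\ continuous f.

Definition dual_norm (f : X -> R) : R :=
  sup [set `|f x| | x in [set x : X | `|x| <= 1]].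

Definition Jset (z : X) : set (X -> R) :=
  [set f | in_dual f /\ dual_norm f = 1 /\ f z = `|z|].

Definition smooth_points : set X :=
  [set z | z != 0 /\ exists f : X -> R, Jset z = [set f]].

End BJ.

Definition preserves_bj_at {R : realType} {X Y : normedModType R}
  (T : X -> Y) (x : X) : Prop :=
  forall v : X, bj_orth x v -> bj_orth (T x) (T v).

(* Main.v *)
Require Import Defs.
From HB Require Import structures.
From mathcomp Require Import all_boot all_order all_algebra.
From mathcomp Require Import all_classical all_reals all_analysis.
From mathcomp Require Import borel_hierarchy.
From mathcomp Require Import ring lra.
Import Order.TTheory GRing.Theory Num.Theory.
Import numFieldNormedType.Exports.
Local Open Scope classical_set_scope.
Local Open Scope ring_scope.
Require Import Defs.
From HB Require Import structures.
From mathcomp Require Import all_boot all_order all_algebra.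
From mathcomp Require Import all_classical all_reals all_analysis.
From mathcomp Require Import borel_hierarchy.
Import Order.TTheory GRing.Theory Num.Theory.
Import numFieldNormedType.Exports.
Local Open Scope classical_set_scope.
Local Open Scope ring_scope.

Section Topo.
Context {R : realType} {V : normedModType R}.

Lemma open_ballP {O : set V} {x} : open O -> O x ->
  exists2 r : R, 0 < r & forall y, `|x - y| < r -> O y.
Proof.
move=> oO Ox.
have /nbhs_ballP[r r0 H] : nbhs x O by apply: open_nbhs_nbhs.
exists r => // y xy; apply: H; rewrite -ball_normE /=.
exact: xy.
Qed.

Lemma ballP_open (O : set V) :
  (forall x, O x -> exists2 r : R, 0 < r & forall y, `|x - y| < r -> O y) ->
  open O.
Proof.
move=> H; rewrite openE => x Ox; rewrite /interior.
apply/nbhs_ballP; have [r r0 Hr] := H x Ox; exists r => // y.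
rewrite -ball_normE /=; exact: Hr.
Qed.

Lemma dense_ball {S : set V} p e : dense S -> 0 < e ->
  exists x, S x /\ `|p - x| < e.
Proof.
move=> dS e0.
have [x [bx Sx]] := dS (ball p e) (ex_intro _ p (ballxx p e0)) (ball_open p e).
by exists x; split => //; move: bx; rewrite -ball_normE.
Qed.

Lemma dense_sub {A B : set V} : dense A -> A `<=` B -> dense B.
Proof.
move=> dA AB O O0 oO; have [x [Ox Ax]] := dA O O0 oO.
by exists x; split => //; apply: AB.
Qed.

End Topo.
Section PreDense.
Context {R : realType} {X Y : completeNormedModType R} (T : {linear X -> Y}).
Hypothesis Tsurj : forall y, exists x, T x = y.
Hypothesis Tcont : continuous T.

Lemma pre_dense (W : set Y) : open W -> dense W -> dense (T @^-1` W).
Proof.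
move=> oW dW O [x0 Ox0] oO.
apply: contrapT => H.
have [r r0 Hr] := open_ballP oO Ox0.
pose a (k : nat) : R := (k.+1%:R)^-1.
have a0 k : 0 < a k by rewrite /a invr_gt0 ltr0n.
pose F (k : nat) := [set y : Y | W (T x0 + a k *: y)].
have oF k : open (F k).
  apply: ballP_open => y Fy.
  have [rho rho0 Hrho] := open_ballP oW Fy.
  exists (rho / a k); first by rewrite divr_gt0.
  move=> z yz; apply: Hrho.
  rewrite opprD addrACA subrr add0r -scalerBr.
  rewrite normrZ gtr0_norm // mulrC -ltr_pdivlMr //.
have dF k : dense (F k).
  move=> U [u Uu] oU.
  have [rho rho0 Hrho] := open_ballP oU Uu.
  have [w [Ww cw]] := dense_ball (T x0 + a k *: u) (a k * rho) dW (mulr_gt0 (a0 k) rho0).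
  exists ((a k)^-1 *: (w - T x0)); split; last first.
    rewrite /F /=; suff -> : T x0 + a k *: ((a k)^-1 *: (w - T x0)) = w by [].
    by rewrite scalerA mulfV ?gt_eqF // scale1r addrC subrK.
  apply: Hrho.
  have -> : u - (a k)^-1 *: (w - T x0) = (a k)^-1 *: (T x0 + a k *: u - w).
    rewrite !(scalerDr, scalerBr, scalerN, scalerA) mulVf ?gt_eqF // scale1r.
    by rewrite opprB addrA (addrC u).
  rewrite normrZ gtr0_norm ?invr_gt0 // mulrC ltr_pdivrMr //.
  by rewrite mulrC.
have [y [_ Iy]] := Baire (fun k => conj (oF k) (dF k)) (ex_intro _ 0 I) openT.
have [x Txy] := Tsurj y.
pose k := Num.Def.trunc (`|x| / r).
apply: H; exists (x0 + a k *: x); split.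
  apply: Hr; rewrite opprD addrA subrr add0r normrN normrZ gtr0_norm //.
  rewrite /a mulrC ltr_pdivrMr ?ltr0n //.
  by rewrite mulrC -ltr_pdivrMr // truncnS_gt.
rewrite /= linearD linearZ Txy.
exact: (Iy k I).
Qed.

End PreDense.
Section SDense.
Context {R : realType} {X Y : completeNormedModType R} (T : {linear X -> Y}).
Hypothesis Tsurj : forall y, exists x, T x = y.
Hypothesis Tcont : continuous T.

Lemma S_dense (A : set X) (B : set Y) : dense A -> Gdelta A -> dense B -> Gdelta B ->
  forall p e, 0 < e -> exists x, A x /\ B (T x) /\ `|p - x| < e.
Proof.
move=> dA [U oU eA] dB [W oW eB] p e e0.
pose F i := U i `&` T @^-1` W i.
have odF i : open (F i) /\ dense (F i).
  have oTW : open (T @^-1` W i) by move/continuousP: Tcont; apply.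
  split; first exact: openI.
  apply: denseI => //.
    have sA : A `<=` U i by rewrite eA => x Ax; exact: (Ax i I).
    exact: (dense_sub dA sA).
  apply: (@pre_dense _ _ _ T Tsurj (W i) (oW i)).
  have sB : B `<=` W i by rewrite eB => x Bx; exact: (Bx i I).
  exact: (dense_sub dB sB).
have [x [Fx Ix]] := dense_ball p e (Baire odF) e0.
exists x; split; [|split] => //.
  by rewrite eA => i _; have [] := Fx i I.
by rewrite eB => i _; have [] := Fx i I.
Qed.

End SDense.
Section OneDim.
Context {R : realType}.

Lemma creep (phi : R -> R) :
  (forall t, 0 <= t <= 1 -> forall e, 0 < e -> exists2 d, 0 < d &
     forall s, 0 <= s <= 1 -> `|s - t| < d -> phi t <= phi s + e) ->
  (forall t, 0 <= t < 1 -> forall e, 0 < e -> exists2 d, 0 < d &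
     forall s, 0 < s < d -> phi (t + s) <= phi t + e * s) ->
  phi 1 <= phi 0.
Proof.
move=> Hc Hl; apply/ler_addgt0Pr => e e0.
pose A := [set t : R | 0 <= t <= 1 /\ forall u, 0 <= u <= t -> phi u <= phi 0 + e * u].
have A0 : A 0.
  split; first by rewrite lexx ler01.
  move=> u /andP[u0 u0']; have -> : u = 0 by apply/eqP; rewrite eq_le u0 u0'.
  by rewrite mulr0 addr0.
have hsA : has_sup A.
  split; first by exists 0.
  by exists 1 => t [/andP[_ ->]].
set c := sup A.
have c0 : 0 <= c by apply: sup_upper_bound.
have c1 : c <= 1 by apply: ge_sup; [exists 0 | move=> t [/andP[_ ->]]].
have Pc : forall u, 0 <= u <= c -> phi u <= phi 0 + e * u.
  move=> u /andP[u0]; rewrite le_eqVlt => /orP[/eqP uc|uc]; last first.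
    have cu0 : 0 < c - u by rewrite subr_gt0.
    have [a Aa ua] := sup_adherent cu0 hsA.
    rewrite opprB addrCA subrr addr0 in ua.
    by apply: Aa.2; rewrite u0 ltW.
  rewrite uc; apply/ler_addgt0Pr => e' e'0.
  have c01 : 0 <= c <= 1 by rewrite c0 c1.
  have [d d0 Hd] := Hc c c01 e' e'0.
  have [a Aa ca] := sup_adherent d0 hsA.
  have ac : a <= c by apply: sup_upper_bound.
  have := Hd a Aa.1 _.
  have -> : `|a - c| < d.
    by rewrite ler0_norm ?subr_le0 // opprB ltrBlDr addrC -ltrBlDr.
  move=> /(_ isT) /le_trans; apply.
  rewrite lerD2r; apply: (le_trans (Aa.2 a _)).
    by rewrite lexx; case: Aa => /andP[-> _].
  by rewrite lerD2l ler_wpM2l // ltW.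
have Ac : A c by split; [rewrite c0 c1 | exact: Pc].
suff c_eq : c = 1 by move: (Pc 1); rewrite c_eq ler01 lexx mulr1; apply.
apply/eqP; rewrite eq_le c1 /=; apply/negP => /negP; rewrite -ltNge => c1'.
have c01' : 0 <= c < 1 by rewrite c0 c1'.
have [d d0 Hd] := Hl c c01' e e0.
pose s := Num.min d (1 - c) / 2.
have s0 : 0 < s by rewrite divr_gt0 // lt_min d0 subr_gt0.
have md : Num.min d (1 - c) <= d by rewrite ge_min lexx.
have m1 : Num.min d (1 - c) <= 1 - c by rewrite ge_min lexx orbT.
have sd : s < d.
  rewrite /s ltr_pdivrMr // (le_lt_trans md) //.
  by rewrite ltr_pMr // ltr1n.
have s1c : s < 1 - c.
  rewrite /s ltr_pdivrMr // (le_lt_trans m1) //.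
  by rewrite ltr_pMr ?subr_gt0 // ltr1n.
have Acs : A (c + s).
  split.
    rewrite (addr_ge0 c0 (ltW s0)) /=; move: s1c; rewrite ltrBrDl => /ltW.
    by rewrite addrC.
  move=> u /andP[u0 ucs]; have [uc|cu] := leP u c.
    by apply: Pc; rewrite u0 uc.
  have -> : u = c + (u - c) by rewrite addrC subrK.
  apply: (le_trans (Hd (u - c) _)).
    by rewrite subr_gt0 cu /= (le_lt_trans _ sd) // lerBlDl.
  by rewrite [e * (c + _)]mulrDr addrA lerD2r Pc // c0 lexx.
have : c + s <= c by apply: sup_upper_bound.
by rewrite gerDl leNgt s0.
Qed.

End OneDim.
Section OneDim2.
Context {R : realType}.

Lemma conv_D2 (F : R -> R) (t B : R) :
  (forall d d', 0 < d -> d <= d' -> (F (t + d) - F t) / d <= (F (t + d') - F t) / d') ->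
  (forall d, 0 < d -> - B <= (F (t + d) - F t) / d) ->
  forall e, 0 < e -> exists2 d0, 0 < d0 &
    forall d, 0 < d -> d < d0 -> F (t + 2 * d) - 2 * F (t + d) + F t <= e * d.
Proof.
move=> Hm Hb e e0.
pose D d := (F (t + d) - F t) / d.
pose E := [set D d | d in [set d : R | 0 < d]].
have lE : has_lbound E by exists (- B) => _ [d d0 <-]; exact: Hb.
have hE : has_inf E by split => //; exists (D 1); exists 1 => //=.
have e20 : 0 < e / 2 by rewrite divr_gt0.
have [_ [d1 d10 <-] Hd1] := inf_adherent e20 hE.
exists (d1 / 2); first by rewrite divr_gt0.
move=> d d0 dd1.
have L : inf E <= D d by apply: ge_inf => //; exists d.
have D2 : D (2 * d) <= D d1.
  apply: Hm; first by rewrite mulr_gt0.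
  by rewrite mulrC -ler_pdivlMr // ltW.
have eq : F (t + 2 * d) - 2 * F (t + d) + F t = 2 * d * (D (2 * d) - D d).
  rewrite /D; field.
  by rewrite gt_eqF.
have h : D (2 * d) - D d <= e / 2 by lra.
rewrite eq; nra.
Qed.

End OneDim2.
Section Core.
Context {R : realType} {X Y : normedModType R} (T : {linear X -> Y}) (K : R).
Hypothesis K0 : 0 < K.
Hypothesis HK : forall x, `|T x| <= K * `|x|.
Hypothesis Tc : continuous T.
Hypothesis Hdense : forall p e, 0 < e ->
  exists x, smooth_points x /\ smooth_points (T x) /\ `|p - x| < e.
Hypothesis Hpres : forall x, smooth_points x -> smooth_points (T x) -> preserves_bj_at T x.

Lemma cont_ed {V W : normedModType R} (f : V -> W) t : {for t, continuous f} ->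
  forall e, 0 < e -> exists2 d, 0 < d & forall s, `|t - s| < d -> `|f t - f s| < e.
Proof.
move=> ft e e0.
have : \forall s \near t, `|f t - f s| < e.
  first [ exact: (cvgr_dist_lt ft e0) | exact: (@cvgr_dist_lt _ _ _ (nbhs t) _ f (f t) ft e e0) | exact: (@cvgr_dist_lt _ _ _ (nbhs t) _ _ f (f t) ft e e0) ].
move/nbhs_ballP => [d d0 H]; exists d => // s ts; apply: H.
by rewrite -ball_normE.
Qed.

Lemma lin0 {f : X -> R} : linear_functional f -> f 0 = 0.
Proof.
move=> lf; have := lf 1 0 0; rewrite scale1r addr0 mul1r; lra.
Qed.

Lemma linZ {f : X -> R} a x : linear_functional f -> f (a *: x) = a * f x.
Proof. by move=> lf; have := lf a x 0; rewrite addr0 (lin0 lf) addr0. Qed.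

Lemma linD {f : X -> R} x y : linear_functional f -> f (x + y) = f x + f y.
Proof. by move=> lf; have := lf 1 x y; rewrite scale1r mul1r. Qed.

Lemma norming {x} : smooth_points x -> x != 0 /\ exists f : X -> R,
  linear_functional f /\ (forall z, f z <= `|z|) /\ f x = `|x|.
Proof.
move=> [x0 [f Jf]]; split => //; exists f.
have : Jset x f by rewrite Jf.
move=> [[lf cf] [nf fx]]; split => //; split => //.
have f0 := lin0 lf.
have [r r0 Hr] := @cont_ed _ _ f 0 (cf 0) 1 ltr01.
pose E := [set `|f y| | y in [set y : X | `|y| <= 1]].
have hE : has_sup E.
  split; first by exists `|f 0|; exists 0 => //=; rewrite normr0 ler01.
  exists (2 / r) => _ [y y1 <-].
  have ry : `|0 - (r / 2) *: y| < r.
    rewrite sub0r normrN normrZ gtr0_norm ?divr_gt0 //.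
    move: y1 => /= y1; have := normr_ge0 y; nra.
  have := Hr _ ry; rewrite f0 sub0r normrN linZ // normrM gtr0_norm ?divr_gt0 //.
  have rr : r * r^-1 = 1 by rewrite divff ?gt_eqF.
  have ri : 0 < r^-1 by rewrite invr_gt0.
  have := normr_ge0 (f y).
  nra.
move=> z; have [->|z0] := eqVneq z 0; first by rewrite f0 normr0.
pose u := `|z|^-1 *: z.
have nz : 0 < `|z| by rewrite normr_gt0.
have u1 : `|u| <= 1.
  by rewrite normrZ normrV ?unitfE ?normr_eq0 // normr_id mulVf ?gt_eqF.
have : `|f u| <= 1 by rewrite -nf; apply: sup_upper_bound => //; exists u.
rewrite linZ // normrM normrV ?unitfE ?normr_eq0 // normr_id.
rewrite ler_pdivrMl // mulr1 => h.
exact: (le_trans (ler_norm _) h).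
Qed.

End Core.
Section Core2.
Context {R : realType} {X Y : normedModType R} (T : {linear X -> Y}).
Hypothesis Hpres : forall x, smooth_points x -> smooth_points (T x) -> preserves_bj_at T x.

Lemma KIx x w : smooth_points x -> smooth_points (T x) ->
  `|T x| * (2 * `|x| - `|x + w|) <= `|x| * `|T (x - w)|.
Proof.
move=> sx sTx; have [x0 [f [lf [fle fx]]]] := norming sx.
have nx : 0 < `|x| by rewrite normr_gt0.
set b := f w.
set lam := 1 - b / `|x|.
have eb : b / `|x| * `|x| = b by rewrite mulfVK ?gt_eqF.
have h1 : 2 * `|x| - `|x + w| <= lam * `|x|.
  have := fle (x + w); rewrite linD // fx -/b => h.
  rewrite /lam mulrBl mul1r eb; lra.
have nTx := normr_ge0 (T x); have nTxw := normr_ge0 (T (x - w)).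
have [lam0|lam0] := ltP 0 lam; last first.
  have h2 : 2 * `|x| - `|x + w| <= 0 by nra.
  nra.
pose u := (- (b / `|x|)) *: x + w.
have fu : f u = 0 by rewrite /u lf fx mulNr eb -/b addNr.
have orth : bj_orth x u.
  move=> l; have := fle (x + l *: u).
  by rewrite linD // linZ // fu mulr0 addr0 fx.
have := Hpres x sx sTx u orth (- lam^-1).
have ex : x - w = lam *: (x + (- lam^-1) *: u).
  rewrite scalerDr scalerA mulrN mulfV ?gt_eqF // scaleN1r /u /lam.
  rewrite scalerBl scale1r opprD scaleNr opprK.
  by rewrite addrA subrK.
move=> h3.
have h4 : lam * `|T x| <= `|T (x - w)|.
  rewrite ex linearZ normrZ gtr0_norm // ler_pM2l //.
  by rewrite linearD linearZ.
nra.
Qed.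

End Core2.
Section Core3.
Context {R : realType} {X Y : normedModType R} (T : {linear X -> Y}).
Hypothesis Tc : continuous T.
Hypothesis Hdense : forall p e, 0 < e ->
  exists x, smooth_points x /\ smooth_points (T x) /\ `|p - x| < e.
Hypothesis Hpres : forall x, smooth_points x -> smooth_points (T x) -> preserves_bj_at T x.

Lemma KI P w : `|T P| * (2 * `|P| - `|P + w|) <= `|P| * `|T (P - w)|.
Proof.
pose Phi x := `|x| * `|T (x - w)| - `|T x| * (2 * `|x| - `|x + w|).
suff : 0 <= Phi P by rewrite subr_ge0.
have cPhi : {for P, continuous Phi}.
  have cid : {for P, continuous (fun x : X => x)} by [].
  have cTw : {for P, continuous (fun x => T (x - w))}.
    apply: (@continuous_comp _ _ _ (fun x => x - w) T).
      by apply: cvgB => //; exact: cvg_cst.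
    exact: Tc.
  apply: cvgB; apply: cvgM.
  - exact: cvg_norm.
  - exact: cvg_norm.
  - exact: cvg_norm (Tc P).
  - apply: cvgB; first by apply: cvgM => //; [exact: cvg_cst | exact: cvg_norm].
    apply: cvg_norm; apply: cvgD => //; exact: cvg_cst.
apply/ler_addgt0Pr => e e0.
have [d d0 Hd] := @cont_ed _ _ _ Phi P cPhi e e0.
have [x [sx [sTx Px]]] := Hdense P d d0.
have := Hd x Px; rewrite ltr_norml => /andP[h1 h2].
have := KIx T Hpres x w sx sTx; rewrite -subr_ge0 -/(Phi x).
lra.
Qed.

End Core3.
Section Line.
Context {R : realType} {X Y : normedModType R} (T : {linear X -> Y}) (K : R).
Hypothesis K0 : 0 < K.
Hypothesis HK : forall x, `|T x| <= K * `|x|.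
Hypothesis Tc : continuous T.
Hypothesis KIall : forall P w, `|T P| * (2 * `|P| - `|P + w|) <= `|P| * `|T (P - w)|.
Variables p v : X.
Hypothesis Hnz : forall s : R, p + s *: v != 0.

Let F s := `|p + s *: v|.
Let G s := `|T (p + s *: v)|.
Let phi s := G s / F s.

Lemma Fpos s : 0 < F s.
Proof. by rewrite /F normr_gt0 Hnz. Qed.

Lemma line_cont : continuous (fun s : R => p + s *: v).
Proof.
move=> s; apply: cvgD; first exact: cvg_cst.
by apply: cvgZ => //; exact: cvg_cst.
Qed.

Lemma phi_cont t : {for t, continuous phi}.
Proof.
apply: cvgM.
  apply: cvg_norm; apply: (@continuous_comp _ _ _ (fun s : R => p + s *: v) T).
    exact: line_cont.
  exact: Tc.
apply: cvgV; first by rewrite gt_eqF // Fpos.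
by apply: cvg_norm; exact: line_cont.
Qed.

Lemma F_mono t d d' : 0 < d -> d <= d' ->
  (F (t + d) - F t) / d <= (F (t + d') - F t) / d'.
Proof.
move=> d0 dd'.
have d'0 : 0 < d' by exact: lt_le_trans dd'.
pose th := d / d'.
have th0 : 0 <= th by rewrite divr_ge0 // ltW.
have th1 : th <= 1 by rewrite ler_pdivrMr // mul1r.
have eq : p + (t + d) *: v = (1 - th) *: (p + t *: v) + th *: (p + (t + d') *: v).
  rewrite !scalerDr !scalerA addrACA -!scalerDl subrK scale1r.
  congr (_ + _ *: _); rewrite /th; field; by rewrite gt_eqF.
have hF : F (t + d) <= (1 - th) * F t + th * F (t + d').
  rewrite /F eq; apply: (le_trans (ler_normD _ _)).
  rewrite !normrZ (ger0_norm (_ : 0 <= 1 - th)) ?subr_ge0 // !gtr0_norm ?invr_gt0 //.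
have -> : (F (t + d') - F t) / d' = (th * (F (t + d') - F t)) / d.
  by rewrite /th; field; rewrite !gt_eqF.
rewrite ler_pM2r ?invr_gt0 //; lra.
Qed.

Lemma F_lb t d : 0 < d -> - `|v| <= (F (t + d) - F t) / d.
Proof.
move=> d0; rewrite ler_pdivlMr //.
have : F t <= F (t + d) + d * `|v|.
  rewrite /F; have -> : p + t *: v = (p + (t + d) *: v) + (- d) *: v.
    by rewrite -addrA -scalerDl addrK.
  apply: (le_trans (ler_normD _ _)).
  by rewrite normrZ normrN gtr0_norm.
lra.
Qed.

Lemma phi_step t : forall e, 0 < e -> exists2 d, 0 < d &
  forall s, 0 < s < d -> phi (t + s) <= phi t + e * s.
Proof.
move=> e e0.
have Ft := Fpos t.
pose e' := e * F t / K.
have e'0 : 0 < e' by rewrite divr_gt0 // mulr_gt0.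
have [d0 d00 Hd0] := @conv_D2 _ F t `|v| (F_mono t) (F_lb t) e' e'0.
exists d0 => // s /andP[s0 sd].
have h2 := Hd0 s s0 sd.
have hK := KIall (p + (t + s) *: v) (s *: v).
have eP : p + (t + s) *: v + s *: v = p + (t + 2 * s) *: v.
  by rewrite -addrA -scalerDl; congr (_ + _ *: _); ring.
have eM : p + (t + s) *: v - s *: v = p + t *: v.
  by rewrite -addrA -scalerBl; congr (_ + _ *: _); ring.
rewrite eP eM -/(F (t + s)) -/(F (t + 2 * s)) -/(G (t + s)) -/(G t) in hK.
have hA : G (t + s) <= K * F (t + s) by exact: HK.
have hA0 : 0 <= G (t + s) by exact: normr_ge0.
have hD0 : 0 <= G t by exact: normr_ge0.
have B0 := Fpos (t + s).
have key : G (t + s) * F t <= F (t + s) * G t + e * s * F (t + s) * F t.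
  have ee : K * e' = e * F t by rewrite /e' mulrC mulfVK ?gt_eqF.
  have k1 : G (t + s) * (F t - e' * s) <= G (t + s) * (2 * F (t + s) - F (t + 2 * s)).
    by apply: ler_wpM2l => //; lra.
  have k2 : G (t + s) * (e' * s) <= K * F (t + s) * (e' * s).
    by apply: ler_wpM2r => //; rewrite mulr_ge0 // ltW.
  have k3 : K * F (t + s) * (e' * s) = e * s * F (t + s) * F t.
    by rewrite mulrAC mulrA ee; ring.
  lra.
have hq : G t / F t * F t = G t by rewrite divfK ?gt_eqF.
rewrite /phi ler_pdivrMr // -(ler_pM2r Ft).
rewrite -hq in key; lra.
Qed.

Lemma phi_le : phi 1 <= phi 0.
Proof.
apply: creep.
  move=> t _ e e0.
  have [d d0 Hd] := @cont_ed _ _ _ phi t (phi_cont t) e e0.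
  exists d => // s _ ts.
  rewrite distrC in ts; have := Hd s ts; rewrite ltr_norml.
  move=> /andP[h1 h2]. lra.
move=> t _; exact: phi_step.
Qed.

End Line.
Section Final.
Context {R : realType} {X Y : normedModType R} (T : {linear X -> Y}) (K : R).
Hypothesis K0 : 0 < K.
Hypothesis HK : forall x, `|T x| <= K * `|x|.
Hypothesis Tc : continuous T.
Hypothesis KIall : forall P w, `|T P| * (2 * `|P| - `|P + w|) <= `|P| * `|T (P - w)|.

Lemma psi_scale c z : c != 0 -> `|T (c *: z)| / `|c *: z| = `|T z| / `|z|.
Proof.
move=> c0; rewrite linearZ !normrZ -mulf_div divff ?mul1r //.
by rewrite normr_eq0.
Qed.

Lemma comb (a b : X) (s : R) : a + s *: (b - a) = (1 - s) *: a + s *: b.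
Proof. by rewrite scalerBl scale1r scalerBr addrCA addrC. Qed.

Lemma psi_eq p q : p != 0 -> q != 0 -> `|T q| / `|q| = `|T p| / `|p|.
Proof.
move=> p0 q0.
have [[s Hs]|Hnz] := pselect (exists s : R, p + s *: (q - p) = 0).
  have s0 : s != 0.
    by apply/negP => /eqP s0; move: Hs; rewrite s0 scale0r addr0 => /eqP; rewrite (negbTE p0).
  have eq : q = (- ((1 - s) / s)) *: p.
    apply: (scalerI s0).
    rewrite scalerA mulrN mulrCA divff // mulr1 opprB scalerBl scale1r.
    have Hw : s *: (q - p) = - p by apply/eqP; rewrite -addr_eq0 addrC Hs.
    by rewrite -{1}(subrK p q) scalerDr Hw addrC.
  rewrite eq psi_scale //; rewrite oppr_eq0 mulf_neq0 ?invr_eq0 //.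
  apply/negP => /eqP s1; move: eq; rewrite s1 mul0r oppr0 scale0r => q00.
  by move: q0; rewrite q00 eqxx.
have Hnz1 : forall s : R, p + s *: (q - p) != 0.
  by move=> s; apply/eqP => h; apply: Hnz; exists s.
have Hnz2 : forall s : R, q + s *: (p - q) != 0.
  move=> s; apply/eqP => h; apply: Hnz; exists (1 - s).
  rewrite -h !comb addrC; congr (_ + _ *: _); ring.
have h1 := phi_le T K K0 HK Tc KIall p (q - p) Hnz1.
have h2 := phi_le T K K0 HK Tc KIall q (p - q) Hnz2.
rewrite /= !scale1r !scale0r !addr0 in h1 h2.
rewrite addrC subrK in h1; rewrite addrC subrK in h2.
by apply/eqP; rewrite eq_le h1 h2.
Qed.

End Final.
Theorem mainTheorem5 (R : realType) (X Y : completeNormedModType R)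
  (T : {linear X -> Y}) :
  dense (@smooth_points R X) -> Gdelta (@smooth_points R X) ->
  dense (@smooth_points R Y) -> Gdelta (@smooth_points R Y) ->
  bijective T ->
  (exists M : R, forall x : X, `|T x| <= M * `|x|) ->
  (forall x : X, smooth_points x -> smooth_points (T x) -> preserves_bj_at T x) ->
  exists lambda : R, 0 < lambda /\ forall x : X, `|T x| = lambda * `|x|.
Proof.
move=> dSX gSX dSY gSY [Tinv TK KT] [M HM] Hpres.
have Tsurj : forall y, exists x, T x = y by move=> y; exists (Tinv y); rewrite KT.
pose K := `|M| + 1.
have K0 : 0 < K by rewrite /K ltr_pwDr // normr_ge0.
have HK : forall x, `|T x| <= K * `|x|.
  move=> x; apply: (le_trans (HM x)); apply: ler_wpM2r => //.
  by rewrite /K (le_trans (ler_norm M)) // lerDl.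
have Tc : continuous T.
  apply/linear_bounded_continuous.
  exists K; split; first exact: num_real.
  move=> M0 KM0.
  apply/nbhs_ballP; exists 1; first exact: ltr01.
  move=> x; rewrite -ball_normE /= sub0r normrN => x1.
  apply: (le_trans (HK x)); apply: (@le_trans _ _ K).
    by rewrite ler_piMr // ltW.
  exact: ltW.
have Hdense := S_dense T Tsurj Tc _ _ dSX gSX dSY gSY.
have KIall := KI T Tc Hdense Hpres.
have [p0 [_ sp0]] := dSX setT (ex_intro _ 0 I) openT.
have p00 : p0 != 0 by case: sp0.
have Tp0 : T p0 != 0.
  apply/negP => /eqP h; move: p00; rewrite -(TK p0) h -(linear0 T) TK eqxx.
  by [].
exists (`|T p0| / `|p0|); split.
  by rewrite divr_gt0 // normr_gt0.
move=> x; have [->|x0] := eqVneq x 0; first by rewrite linear0 !normr0 mulr0.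
rewrite -(psi_eq T K K0 HK Tc KIall p0 x p00 x0) divfK //.
by rewrite normr_eq0.
Qed.
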